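(* Let $\omega$ be a Hölder-like modulus of continuity and $(\mathcal{X},d_{\mathcal{X}})$ a metric space. Then $d^\omega_{\mathcal{X}}:=\omega\circ d_{\mathcal{X}}$ is a metric on $\mathcal{X}$, and the identity map $(\mathcal{X},d_{\mathcal{X}})\to(\mathcal{X},d^\omega_{\mathcal{X}})$ is quasisymmetric. Furthermore, if $K\subseteq\mathcal{X}$ is $d_{\mathcal{X}}$-doubling then it is also $d^\omega_{\mathcal{X}}$-doubling.
   Context: A Hölder-like modulus of continuity is a function $\omega:[0,\infty)\to[0,\infty)$ with $\omega(0)=0$ that is strictly increasing, subadditive and continuous, for which there is an increasing homeomorphism $h_\omega:[0,\infty)\to[0,\infty)$ with $\omega(st)\le h_\omega(s)\omega(t)$ for all $s,t\ge0$. A topological embedding $\varphi:(\mathcal{X},d_{\mathcal{X}})\to(\mathcal{Y},d_{\mathcal{Y}})$ is quasisymmetric if there is a strictly increasing surjection $\eta:[0,\infty)\to[0,\infty)$ such that $d_{\mathcal{X}}(x_1,x_2)\le t\,d_{\mathcal{X}}(x_1,x_3)$ implies $d_{\mathcal{Y}}(\varphi(x_1),\varphi(x_2))\le\eta(t)d_{\mathcal{Y}}(\varphi(x_1),\varphi(x_3))$. A (subset of a) metric space is doubling if there is a finite number $C$ such that every ball of radius $2r$ can be covered by $C$ balls of radius $r$. *)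

(* Defs.v *)
From Stdlib Require Import Reals Lra List.
Open Scope R_scope.

Definition is_metric {X : Type} (d : X -> X -> R) : Prop :=
  (forall x y, 0 <= d x y) /\
  (forall x y, d x y = 0 <-> x = y) /\
  (forall x y, d x y = d y x) /\
  (forall x y z, d x z <= d x y + d y z).

Definition cont_on_nonneg (f : R -> R) : Prop :=
  forall x, 0 <= x -> forall eps, 0 < eps -> exists delta, 0 < delta /\
    forall y, 0 <= y -> Rabs (y - x) < delta -> Rabs (f y - f x) < eps.

Definition maps_nonneg (f : R -> R) : Prop := forall x, 0 <= x -> 0 <= f x.

Definition strictly_increasing_nonneg (f : R -> R) : Prop :=
  forall x y, 0 <= x -> x < y -> f x < f y.

Definition surjective_nonneg (f : R -> R) : Prop :=
  forall y, 0 <= y -> exists x, 0 <= x /\ f x = y.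

Definition increasing_homeomorphism (h : R -> R) : Prop :=
  maps_nonneg h /\
  (forall x y, 0 <= x -> x <= y -> h x <= h y) /\
  cont_on_nonneg h /\
  exists g : R -> R, maps_nonneg g /\ cont_on_nonneg g /\
    (forall x, 0 <= x -> g (h x) = x) /\ (forall y, 0 <= y -> h (g y) = y).

Definition holder_like_modulus (w : R -> R) : Prop :=
  w 0 = 0 /\ maps_nonneg w /\
  strictly_increasing_nonneg w /\
  (forall s t, 0 <= s -> 0 <= t -> w (s + t) <= w s + w t) /\
  cont_on_nonneg w /\
  exists h : R -> R, increasing_homeomorphism h /\
    forall s t, 0 <= s -> 0 <= t -> w (s * t) <= h s * w t.

Definition topological_embedding {X Y : Type} (dX : X -> X -> R)
    (dY : Y -> Y -> R) (phi : X -> Y) : Prop :=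
  (forall x x', phi x = phi x' -> x = x') /\
  (forall x eps, 0 < eps -> exists delta, 0 < delta /\
     forall x', dX x x' < delta -> dY (phi x) (phi x') < eps) /\
  (forall x eps, 0 < eps -> exists delta, 0 < delta /\
     forall x', dY (phi x) (phi x') < delta -> dX x x' < eps).

Definition quasisymmetric {X Y : Type} (dX : X -> X -> R)
    (dY : Y -> Y -> R) (phi : X -> Y) : Prop :=
  topological_embedding dX dY phi /\
  exists eta : R -> R, strictly_increasing_nonneg eta /\ maps_nonneg eta /\
    surjective_nonneg eta /\
    forall x1 x2 x3 t, 0 <= t -> dX x1 x2 <= t * dX x1 x3 ->
      dY (phi x1) (phi x2) <= eta t * dY (phi x1) (phi x3).

Definition doubling {X : Type} (d : X -> X -> R) (K : X -> Prop) : Prop :=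
  exists C : nat, forall x r, K x -> 0 < r ->
    exists cs : list X, (length cs <= C)%nat /\ (forall c, In c cs -> K c) /\
      forall y, K y -> d x y < 2 * r -> exists c, In c cs /\ d c y < r.

(* Main.v *)
Require Import Defs.
From Stdlib Require Import Reals.
From Stdlib Require Import Lra Lia List Classical.
Open Scope R_scope.

Lemma pow2_ge_INR (n : nat) : INR n <= 2 ^ n.
Proof.
  induction n as [|n IH]; [simpl; lra|].
  rewrite S_INR; simpl. assert (1 <= 2 ^ n) by (apply pow_R1_Rle; lra). lra.
Qed.

Lemma pow2_pos (n : nat) : 0 < 2 ^ n.
Proof. apply pow_lt; lra. Qed.

Section Iter.
Variable X : Type.
Variable d : X -> X -> R.
Variable K : X -> Prop.
Variable C : nat.
Hypothesis HC : forall x r, K x -> 0 < r ->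
    exists cs : list X, (length cs <= C)%nat /\ (forall c, In c cs -> K c) /\
      forall y, K y -> d x y < 2 * r -> exists c, In c cs /\ d c y < r.

Lemma iter_doubling (k : nat) : forall x rho, K x -> 0 < rho ->
    exists cs : list X, (length cs <= C ^ k)%nat /\ (forall c, In c cs -> K c) /\
      forall y, K y -> d x y < 2 ^ k * rho -> exists c, In c cs /\ d c y < rho.
Proof.
  induction k as [|k IH]; intros x rho Kx Hrho.
  - exists (x :: nil). simpl. split; [lia|]. split.
    + intros c [->|[]]; auto.
    + intros y _ Hy. exists x. split; [auto|lra].
  - assert (Hr : 0 < 2 ^ k * rho) by (apply Rmult_lt_0_compat; [apply pow2_pos|lra]).
    destruct (HC x (2 ^ k * rho) Kx Hr) as [cs [Hlen [HK Hcov]]].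
    assert (Hlist : forall l : list X, (forall c, In c l -> K c) ->
      exists ds : list X, (length ds <= length l * C ^ k)%nat /\ (forall c, In c ds -> K c) /\
      forall y, K y -> (exists c, In c l /\ d c y < 2 ^ k * rho) ->
        exists e, In e ds /\ d e y < rho).
    { induction l as [|a l IHl]; intros Hl.
      - exists nil. simpl. split; [lia|]. split; [tauto|].
        intros y _ [c [[] _]].
      - destruct IHl as [ds [Hd1 [Hd2 Hd3]]]. { intros c Hc; apply Hl; simpl; auto. }
        destruct (IH a rho) as [es [He1 [He2 He3]]]; [apply Hl; simpl; auto|lra|].
        exists (es ++ ds). rewrite length_app. simpl. split; [lia|]. split.
        + intros c Hc. apply in_app_or in Hc. destruct Hc; auto.
        + intros y Ky [c [[<-|Hc] Hcy]].
          * destruct (He3 y Ky Hcy) as [e [He Hey]]. exists e. split; auto.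
            apply in_or_app; auto.
          * destruct (Hd3 y Ky (ex_intro _ c (conj Hc Hcy))) as [e [He Hey]].
            exists e. split; auto. apply in_or_app; auto. }
    destruct (Hlist cs HK) as [ds [Hd1 [Hd2 Hd3]]].
    exists ds. split.
    + simpl. eapply Nat.le_trans; [exact Hd1|]. apply Nat.mul_le_mono_r. exact Hlen.
    + split; auto. intros y Ky Hy. apply Hd3; auto. apply Hcov; auto.
      simpl in Hy. lra.
Qed.
End Iter.

Theorem mainTheorem8 (w : R -> R) (X : Type) (d : X -> X -> R) :
  holder_like_modulus w -> is_metric d ->
  is_metric (fun x y => w (d x y)) /\
  quasisymmetric d (fun x y => w (d x y)) (fun x : X => x) /\
  (forall K : X -> Prop, doubling d K -> doubling (fun x y => w (d x y)) K).
Proof.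
  intros [w0 [wnn [wsi [wsub [wcont [h [[hnn [hmono [hcont [g [gnn [gcont [ghK hgK]]]]]]] hsc]]]]]]]
         [dnn [d0 [dsym dtri]]].
  assert (wmono : forall x y, 0 <= x -> x <= y -> w x <= w y).
  { intros x y Hx Hxy. destruct (Rle_lt_or_eq_dec _ _ Hxy) as [H|H].
    - left; apply wsi; auto.
    - subst; lra. }
  assert (wpos : forall x, 0 < x -> 0 < w x).
  { intros x Hx. rewrite <- w0. apply wsi; lra. }
  assert (h0 : h 0 = 0).
  { assert (h 0 <= h (g 0)) by (apply hmono; [lra| apply gnn; lra]).
    rewrite hgK in H by lra. specialize (hnn 0 (Rle_refl 0)). lra. }
  split; [|split].
  -
    split; [|split; [|split]].
    + intros; apply wnn, dnn.
    + intros x y; split.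
      * intros H. apply d0. destruct (Rle_lt_or_eq_dec _ _ (dnn x y)) as [H'|H'].
        -- apply wpos in H'. lra.
        -- auto.
      * intros ->. replace (d y y) with 0 by (symmetry; apply d0; auto). auto.
    + intros; rewrite dsym; auto.
    + intros x y z. eapply Rle_trans.
      * apply wmono; [apply dnn| apply dtri].
      * apply wsub; apply dnn.
  - split.
    + split; [auto|split].
      * intros x eps Heps. destruct (wcont 0 (Rle_refl 0) eps Heps) as [del [Hdel Hc]].
        exists del. split; auto. intros x' Hx'.
        specialize (Hc (d x x') (dnn x x')). rewrite w0, !Rminus_0_r in Hc.
        rewrite Rabs_right in Hc by (apply Rle_ge, dnn).
        specialize (Hc Hx'). rewrite Rabs_right in Hc by (apply Rle_ge, wnn, dnn). auto.
      * intros x eps Heps. exists (w eps). split; [apply wpos; auto|].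
        intros x' Hx'. destruct (Rlt_or_le (d x x') eps) as [H|H]; auto.
        assert (w eps <= w (d x x')) by (apply wmono; lra). lra.
    + exists h. split; [|split; [auto|split]].
      * intros x y Hx Hxy. destruct (Rle_lt_or_eq_dec _ _ (hmono x y Hx (Rlt_le _ _ Hxy)))
          as [H|H]; auto.
        exfalso. assert (g (h x) = g (h y)) by (rewrite H; auto).
        rewrite !ghK in H0 by lra. lra.
      * intros y Hy. exists (g y). split; auto.
      * intros x1 x2 x3 t Ht H. eapply Rle_trans.
        -- apply (wmono _ (t * d x1 x3)); [apply dnn|exact H].
        -- apply hsc; auto.
  -
    intros K [C HC].
    set (s0 := g (/4)).
    assert (Hs0 : h s0 = /4) by (apply hgK; lra).
    assert (s0pos : 0 < s0).
    { assert (0 <= s0) by (apply gnn; lra).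
      destruct (Rle_lt_or_eq_dec _ _ H) as [H'|H']; auto.
      rewrite <- H' in Hs0. lra. }
    set (M := / s0).
    assert (Mpos : 0 < M) by (apply Rinv_0_lt_compat; auto).
    destruct (INR_archimed 1 M) as [k Hk]; [lra|].
    assert (HkM : M <= 2 ^ k) by (pose proof (pow2_ge_INR k); lra).
    exists (C ^ k)%nat. intros x r Kx Hr.
    (* find b > 0 with r/2 < w b <= r *)
    assert (w1 : 0 < w 1) by (apply wpos; lra).
    destruct (hcont 0 (Rle_refl 0) (w 1 / r)) as [del [Hdel Hhc]].
    { apply Rdiv_lt_0_compat; auto. }
    set (T := Rmax 1 (2 / del)).
    assert (Tpos : 1 <= T) by apply Rmax_l.
    assert (HT : r < w T).
    { assert (/ T < del).
      { assert (2 / del <= T) by apply Rmax_r.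
        apply (Rmult_lt_reg_l T); [lra|]. rewrite Rinv_r by lra.
        apply (Rmult_lt_reg_r (/ del)); [apply Rinv_0_lt_compat; lra|].
        rewrite Rmult_assoc, Rinv_r, Rmult_1_r, Rmult_1_l by lra.
        unfold Rdiv in H. lra. }
      assert (0 < / T) by (apply Rinv_0_lt_compat; lra).
      specialize (Hhc (/ T) (Rlt_le _ _ H0)). rewrite h0, !Rminus_0_r in Hhc.
      rewrite Rabs_right in Hhc by lra.
      specialize (Hhc ltac:(lra)).
      rewrite Rabs_right in Hhc by (apply Rle_ge, hnn; lra).
      assert (Hs := hsc (/ T) T ltac:(lra) ltac:(lra)).
      rewrite Rinv_l in Hs by lra.
      assert (0 < w T) by (apply wpos; lra).
      assert (h (/ T) * w T < w 1 / r * w T) by (apply Rmult_lt_compat_r; auto).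
      assert (w 1 < w 1 / r * w T) by lra.
      assert (w 1 * r < w 1 * w T).
      { replace (w 1 * w T) with ((w 1 / r * w T) * r) by (field; lra).
        apply Rmult_lt_compat_r; lra. }
      apply (Rmult_lt_reg_l (w 1)); lra. }
    assert (Hb : exists b, 0 < b /\ r / 2 < w b /\ w b <= r).
    { destruct (wcont 0 (Rle_refl 0) r Hr) as [del2 [Hdel2 Hwc]].
      destruct (INR_archimed del2 T) as [N HN]; [lra|].
      assert (HNle : w (T / 2 ^ N) <= r).
      { assert (0 < T / 2 ^ N) by (apply Rdiv_lt_0_compat; [lra|apply pow2_pos]).
        specialize (Hwc (T / 2 ^ N) ltac:(lra)). rewrite w0, !Rminus_0_r in Hwc.
        rewrite !Rabs_right in Hwc; [| apply Rle_ge, wnn; lra | lra].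
        apply Rlt_le, Hwc.
        pose proof (pow2_ge_INR N). pose proof (pow2_pos N).
        apply (Rmult_lt_reg_r (2 ^ N)); auto. unfold Rdiv.
        rewrite Rmult_assoc, Rinv_l, Rmult_1_r by lra.
        assert (INR N * del2 <= 2 ^ N * del2) by (apply Rmult_le_compat_r; lra). lra. }
      clear HN.
      induction N as [|N IHN].
      - simpl in HNle. rewrite Rdiv_1_r in HNle. lra.
      - destruct (Rle_or_lt (w (T / 2 ^ N)) r) as [H|H]; [apply IHN; auto|].
        exists (T / 2 ^ S N). pose proof (pow2_pos N).
        split; [apply Rdiv_lt_0_compat; [lra|apply pow2_pos]|split; auto].
        replace (T / 2 ^ N) with (T / 2 ^ S N + T / 2 ^ S N) in H
          by (simpl; field; lra).
        assert (0 <= T / 2 ^ S N) by (apply Rlt_le, Rdiv_lt_0_compat; [lra|apply pow2_pos]).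
        pose proof (wsub _ _ H1 H1). lra. }
    destruct Hb as [b [bpos [Hb1 Hb2]]].
    destruct (iter_doubling X d K C HC k x b Kx bpos) as [cs [Hl [HK Hcov]]].
    exists cs. split; auto. split; auto.
    intros y Ky Hy.
    assert (Hdy : d x y < 2 ^ k * b).
    { destruct (Rlt_or_le (d x y) (M * b)) as [H|H].
      - assert (M * b <= 2 ^ k * b) by (apply Rmult_le_compat_r; lra). lra.
      - exfalso.
        assert (w (M * b) <= w (d x y)) by (apply wmono; [nra|auto]).
        assert (Hs := hsc s0 (M * b) ltac:(lra) ltac:(nra)).
        replace (s0 * (M * b)) with b in Hs by (unfold M; field; lra).
        rewrite Hs0 in Hs. lra. }
    destruct (Hcov y Ky Hdy) as [c [Hc Hcy]].
    exists c. split; auto.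
    assert (w (d c y) < w b) by (apply wsi; auto).
    lra.
Qed.
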